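(* Let $q$ be a prime power. For all positive integers $d,t$ with $d<q$ and $t+1<q$, an optimum $(d,t)$-CDA$((d+1)q^t;q+t-1,q)$ exists. Moreover, if $q\ge4$ is a power of $2$, then an optimum $(d,2)$-CDA$((d+1)q^2;2q+3,q)$ exists for every positive integer $d<q$.
   Context: Consecutive $t$-way interaction in an $N\times k$ array $A=(a_{ij})$ over a $v$-set $V$: $T=\{(i,x_i),\dots,(i+t-1,x_{i+t-1})\}$, $1\le i\le k-t+1$, $x_r\in V$; $\rho(A,T)=\{r: a_{r,j}=x_j\ \forall (j,x_j)\in T\}$, $\rho(A,\mathcal T)=\bigcup_{T\in\mathcal T}\rho(A,T)$. A $(d,t)$-CDA$(N;k,v)$ is an $N\times k$ array over $V$ in which every $t$ consecutive columns contain every $t$-tuple at least once, and such that for every set $\mathcal T$ of exactly $d$ distinct consecutive $t$-way interactions and every consecutive $t$-way interaction $T$: $\rho(A,T)\subseteq\rho(A,\mathcal T)$ iff $T\in\mathcal T$. It is optimum if $N=(d+1)v^t$. *)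

(* Defs.v *)
From mathcomp Require Import all_boot all_order all_algebra.
Set Implicit Arguments. Unset Strict Implicit. Unset Printing Implicit Defensive.

(* An N x k array over the v-set V = 'I_v is a matrix A : 'M['I_v]_(N, k).
   Rows, columns and symbols are 0-based. *)

(* A consecutive t-way interaction in an array with k columns:
   a starting column i (0-based, i.e. i <= k - t) together with the
   t-tuple (x_i, ..., x_{i+t-1}) of symbols it prescribes on columns
   i, ..., i+t-1. *)
Definition cinter (k t v : nat) : finType :=
  ('I_(k - t).+1 * (t.-tuple 'I_v))%type.

Definition rho (N k v t : nat) (A : 'M['I_v]_(N, k)) (T : cinter k t v)
  : {set 'I_N} :=
  [set r : 'I_N | [forall j : 'I_t, forall c : 'I_k,
      (val c == (val T.1 + val j)%N) ==> (A r c == tnth T.2 j)]].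

Definition rhoS (N k v t : nat) (A : 'M['I_v]_(N, k))
  (calT : {set cinter k t v}) : {set 'I_N} :=
  \bigcup_(T in calT) rho A T.

Definition isCDA (d t N k v : nat) (A : 'M['I_v]_(N, k)) : Prop :=
  (t <= k)%N /\
  (forall T : cinter k t v, rho A T != set0) /\
  (forall (calT : {set cinter k t v}) (T : cinter k t v),
      #|calT| = d ->
      (rho A T \subset rhoS A calT) <-> (T \in calT)).

Definition optimumCDA (d t N k v : nat) (A : 'M['I_v]_(N, k)) : Prop :=
  isCDA d t A /\ N = ((d + 1) * v ^ t)%N.

Definition prime_power (q : nat) : Prop :=
  exists p e : nat, prime p /\ (0 < e)%N /\ q = (p ^ e)%N.

(* Main.v *)
Require Import Defs.
From mathcomp Require Import all_boot all_order all_algebra.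
From mathcomp Require Import zify ring finfield.
Set Implicit Arguments. Unset Strict Implicit. Unset Printing Implicit Defensive.

Lemma card_bigcup_le (T I : finType) (P : pred I) (F : I -> {set T}) :
  (#|\bigcup_(i | P i) F i| <= \sum_(i | P i) #|F i|)%N.
Proof.
elim/big_rec2: _ => [|i U s _ H]; first by rewrite cards0.
apply: leq_trans (leq_card_setU _ _) _; exact: leq_add.
Qed.

Lemma cda_crit (d t N k v : nat) (A : 'M['I_v]_(N, k)) :
  (t <= k)%N ->
  (forall T : cinter k t v, (d + 1 <= #|rho A T|)%N) ->
  (forall T T' : cinter k t v, T != T' -> (#|rho A T :&: rho A T'| <= 1)%N) ->
  isCDA d t A.
Proof.
move=> tk H1 H2; split => //; split.
  by move=> T; rewrite -card_gt0; apply: leq_trans (H1 T); rewrite addn1.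
move=> calT T cd; split; last first.
  by move=> TT; rewrite /rhoS (bigcup_sup T TT).
move=> sub; apply/negPn/negP => nT.
have: (#|rho A T| <= d)%N.
  have -> : rho A T = \bigcup_(T' in calT) (rho A T :&: rho A T').
    apply/setP => r; apply/idP/idP => [rr|].
      have := subsetP sub r rr; rewrite /rhoS => /bigcupP [T' T'c rr'].
      by apply/bigcupP; exists T' => //; rewrite inE rr rr'.
    by move/bigcupP => [T' _]; rewrite inE => /andP[].
  apply: leq_trans (card_bigcup_le _ _) _.
  rewrite -cd -sum1_card; apply: leq_sum => T' T'c; apply: H2.
  by apply: contraNneq nT => ->.
by rewrite leqNgt (leq_trans _ (H1 T)) // addn1.
Qed.

Lemma transfer (X : finType) (N k v t d : nat) (f : X -> nat -> 'I_v)
  (pr : X -> 'I_(d+1)) :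
  N = #|X| -> (t <= k)%N ->
  (forall (i : nat) (tup : t.-tuple 'I_v), (i <= k - t)%N -> forall c,
     exists x, pr x = c /\ forall (j : 'I_t), f x (i + j) = tnth tup j) ->
  (forall x x' i i', x != x' -> (i <= k-t)%N -> (i' <= k-t)%N -> i != i' ->
     (forall j, (j < t)%N -> f x (i+j) = f x' (i+j)) ->
     (forall j, (j < t)%N -> f x (i'+j) = f x' (i'+j)) -> False) ->
  exists A : 'M['I_v]_(N,k), isCDA d t A.
Proof.
move=> -> tk H1 H2.
pose A : 'M['I_v]_(#|X|, k) := (\matrix_(r, c) f (enum_val r) (val c))%R.
have inrho (T : cinter k t v) (r : 'I_#|X|) : reflect (forall j : 'I_t, f (enum_val r) (T.1 + j) = tnth T.2 j)
                   (r \in rho A T).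
  rewrite inE; apply: (iffP forallP) => [H j|H j].
    have lt : (T.1 + j < k)%N.
      have := ltn_ord T.1; have := ltn_ord j; lia.
    have := H j; move/forallP/(_ (Ordinal lt)); rewrite eqxx /= mxE.
    by move/eqP.
  apply/forallP => c; apply/implyP => /eqP ec; rewrite mxE ec; apply/eqP; exact: H.
exists A; apply: cda_crit => // [T|T T' nTT'].
  have Ti : (T.1 <= k - t)%N by have := ltn_ord T.1; lia.
  have ex c : exists x, (pr x == c) && [forall j : 'I_t, f x (T.1 + j) == tnth T.2 j].
    have [x [px cx]] := H1 _ T.2 Ti c; exists x; rewrite px eqxx /=.
    by apply/forallP => j; rewrite cx.
  pose g c := xchoose (ex c).
  have ig : injective g.
    move=> c c' e; have := xchooseP (ex c); have := xchooseP (ex c').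
    by rewrite -/(g c) -/(g c') e => /andP[/eqP -> _] /andP[/eqP -> _].
  have cg c (j : 'I_t) : f (g c) (T.1 + j) = tnth T.2 j.
    by have /andP[_ /forallP /(_ j) /eqP] := xchooseP (ex c).
  have <- : #|[set enum_rank (g c) | c in 'I_(d+1)]| = d + 1.
    rewrite card_imset ?card_ord //; move=> c c' /enum_rank_inj; exact: ig.
  apply: subset_leq_card; apply/subsetP => r /imsetP [c _ ->].
  by apply/inrho => j; rewrite enum_rankK cg.
apply/card_le1_eqP => r r'; rewrite !in_setI => /andP[/inrho rT /inrho rT'] /andP[/inrho r'T /inrho r'T'].
apply/eqP/negPn/negP => nrr.
have nx : enum_val r != enum_val r'.
  by apply: contra nrr => /eqP /enum_val_inj ->.
have [e1|ne1] := eqVneq T.1 T'.1.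
  move: nTT'; case: T e1 rT r'T => [i tu] /= e1 rT r'T; case: T' e1 rT' r'T' => [i' tu'] /= e1.
  subst i' => rT' _; suff -> : tu = tu' by rewrite eqxx.
  by apply: eq_from_tnth => j; rewrite -rT rT'.
apply: (H2 _ _ T.1 T'.1 nx).
- by have := ltn_ord T.1; lia.
- by have := ltn_ord T'.1; lia.
- by apply: contra ne1 => /eqP e; apply/eqP; apply: val_inj.
- by move=> j jt; have := rT (Ordinal jt); have := r'T (Ordinal jt) => /= -> ->.
- by move=> j jt; have := rT' (Ordinal jt); have := r'T' (Ordinal jt) => /= -> ->.
Qed.
Definition sig2 (q h c : nat) : nat :=
  if c <= q then c else if c == q.+1 then 0 else
  if c <= q + 1 + h then 2 * (c - q - 1) else
  if c <= 2 * q + 1 then 2 * (c - q - 1 - h) - 1 else 0.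

Definition win (q h w a b : nat) : Prop :=
  (w < q /\ a = w /\ b = w.+1) \/ (w = q /\ a = q /\ b = 0) \/
  (exists2 m, m < h & w = q + 1 + m /\ a = 2 * m /\ b = 2 * m + 2) \/
  (w = q + 1 + h /\ a = q /\ b = 1) \/
  (exists2 m, 0 < m < h & w = q + 1 + h + m /\ a = 2 * m - 1 /\ b = 2 * m + 1) \/
  (w = 2 * q + 1 /\ a = q - 1 /\ b = 0).

Lemma sig2_winP q h w : q = 2 * h -> 2 <= h -> w <= 2 * q + 1 ->
  win q h w (sig2 q h w) (sig2 q h w.+1).
Proof.
move=> qh h2 wl; rewrite /win /sig2.
repeat case: ifP => ?;
first [ left; lia | right; left; lia
      | right; right; left; exists (w - q - 1); lia
      | do 3 right; left; lia
      | do 4 right; left; exists (w - q - 1 - h); lia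
      | do 5 right; lia ].
Qed.


Lemma win_basic q h w a b : q = 2 * h -> 2 <= h -> win q h w a b ->
  a <= q /\ b <= q /\ a <> b.
Proof.
move=> qh h2 [|[|[|[|[|]]]]]; try (case=> m ?); lia.
Qed.

Lemma win_dist q h w a b w' a' b' : q = 2 * h -> 2 <= h ->
  win q h w a b -> win q h w' a' b' -> w <> w' ->
  ~ (a = a' /\ b = b') /\ ~ (a = b' /\ b = a').
Proof.
move=> qh h2 W1 W2 nw.
case: W1 => [|[|[|[|[|]]]]]; try (case=> m ?);
case: W2 => [|[|[|[|[|]]]]]; try (case=> m' ?); lia.
Qed.

Import GRing.Theory.
Local Open Scope ring_scope.


Lemma poly_eq_roots (F : fieldType) (P Q : {poly F}) (n : nat) (r : nat -> F) :
  (size P <= n)%N -> (size Q <= n)%N ->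
  (forall i j, (i < n)%N -> (j < n)%N -> r i = r j -> i = j) ->
  (forall i, (i < n)%N -> P.[r i] = Q.[r i]) -> P = Q.
Proof.
move=> sP sQ ri PQ; apply/eqP; rewrite -subr_eq0; apply/eqP.
apply: (@roots_geq_poly_eq0 _ _ [seq r i | i <- iota 0 n]).
- apply/allP => z /mapP [i]; rewrite mem_iota add0n => /andP[_ ilt] ->.
  by rewrite /root hornerD hornerN PQ // subrr.
- rewrite map_inj_in_uniq ?iota_uniq // => i j; rewrite !mem_iota !add0n.
  by move=> /andP[_ ?] /andP[_ ?]; apply: ri.
- rewrite size_map size_iota; apply: leq_trans (size_polyD _ _) _.
  by rewrite size_polyN geq_max sP sQ.
Qed.

Definition co (F : fieldType) (t d : nat) (s : 'I_(d+1) -> F)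
  (x : 'I_(d+1) * {ffun 'I_t -> F}) (l : nat) : F :=
  if @insub _ (fun l => (l < t)%N) _ l is Some j then x.2 j else s x.1.

Definition Pol (F : fieldType) (t d : nat) (s : 'I_(d+1) -> F)
  (x : 'I_(d+1) * {ffun 'I_t -> F}) : {poly F} :=
  \poly_(l < t.+1) co s x l.

Lemma Pol_coefj (F : fieldType) t d (s : 'I_(d+1) -> F) (x : 'I_(d+1) * {ffun 'I_t -> F}) (j : 'I_t) :
  (Pol s x)`_j = x.2 j.
Proof.
rewrite coef_poly (ltn_trans (ltn_ord j) (ltnSn t)) /co.
by case: insubP => [j' _ /val_inj -> //|]; rewrite ltn_ord.
Qed.

Lemma Pol_coeft (F : fieldType) t d (s : 'I_(d+1) -> F) (x : 'I_(d+1) * {ffun 'I_t -> F}) :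
  (Pol s x)`_t = s x.1.
Proof.
rewrite coef_poly ltnSn /co.
by case: insubP => // j; rewrite ltnn.
Qed.

Lemma Pol_coefbig (F : fieldType) t d (s : 'I_(d+1) -> F) (x : 'I_(d+1) * {ffun 'I_t -> F}) l :
  (t < l)%N -> (Pol s x)`_l = 0.
Proof. by move=> tl; rewrite coef_poly ltnNge tl. Qed.

Lemma Pol_size (F : fieldType) t d (s : 'I_(d+1) -> F) (x : 'I_(d+1) * {ffun 'I_t -> F}) :
  (size (Pol s x) <= t.+1)%N.
Proof. exact: size_poly. Qed.

Lemma Pol_inj (F : fieldType) t d (s : 'I_(d+1) -> F) (x x' : 'I_(d+1) * {ffun 'I_t -> F}) :
  Pol s x = Pol s x' -> s x.1 = s x'.1 /\ x.2 = x'.2.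
Proof.
move=> e; split; first by rewrite -!Pol_coeft e.
by apply/ffunP => j; rewrite -(Pol_coefj s x) -(Pol_coefj s x') e.
Qed.

Lemma Pol_cover (F : finFieldType) t d (s : 'I_(d+1) -> F) (r : nat -> F) :
  (forall i j, (i < t)%N -> (j < t)%N -> r i = r j -> i = j) ->
  forall c (y : 'I_t -> F), exists g : {ffun 'I_t -> F},
    forall j : 'I_t, (Pol s (c, g)).[r j] = y j.
Proof.
move=> ri c y.
pose phi (g : {ffun 'I_t -> F}) : {ffun 'I_t -> F} :=
  [ffun j : 'I_t => (Pol s (c, g)).[r j]].
have iphi : injective phi.
  move=> g g' e.
  have D : Pol s (c, g) - Pol s (c, g') = 0.
    apply: (@poly_eq_roots _ _ _ t r) => //.
    - apply/leq_sizeP => l; rewrite leq_eqVlt => /orP[/eqP <-|tl].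
        by rewrite coefB !Pol_coeft subrr.
      by rewrite coefB !Pol_coefbig // subrr.
    - by rewrite size_poly0.
    - move=> i it; rewrite hornerD hornerN horner0.
      have := congr1 (fun h : {ffun 'I_t -> F} => h (Ordinal it)) e; rewrite /phi !ffunE /= => ->.
      by rewrite subrr.
  apply/ffunP => j; have := congr1 (fun p : {poly F} => p`_j) D.
  by rewrite coefB coef0 !Pol_coefj /= => /eqP; rewrite subr_eq0 => /eqP.
have [psi _ phiK] := injF_bij iphi.
exists (psi [ffun j => y j]) => j.
by have := congr1 (fun h : {ffun 'I_t -> F} => h j) (phiK [ffun j => y j]); rewrite /phi !ffunE.
Qed.

Local Open Scope ring_scope.

Lemma codes (F : finFieldType) (q : nat) : #|F| = q ->
  exists (enc : 'I_q -> F) (dec : F -> 'I_q) (pt : nat -> F),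
    cancel dec enc /\ cancel enc dec /\
    (forall m n, (m < q)%N -> (n < q)%N -> pt m = pt n -> m = n).
Proof.
move=> Hq.
exists (fun i => enum_val (cast_ord (esym Hq) i)).
exists (fun y => cast_ord Hq (enum_rank y)).
exists (fun n => nth 0 (enum F) n).
split; first by move=> y; rewrite cast_ordK enum_rankK.
split; first by move=> i; rewrite enum_valK cast_ordKV.
move=> m n mq nq /eqP; rewrite nth_uniq ?enum_uniq -?cardE ?Hq //.
by move/eqP.
Qed.

Definition sig1 (q n : nat) := if (n < q)%N then n else (n - q)%N.

Lemma sig1_spec q n : ((n < q)%N /\ sig1 q n = n) \/ ((q <= n)%N /\ sig1 q n = (n - q)%N).
Proof. by rewrite /sig1; case: ltnP; [left|right]. Qed.

Lemma part1 (F : finFieldType) (q d t : nat) : #|F| = q -> (0 < t)%N ->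
  (d < q)%N -> (t.+1 < q)%N ->
  exists A : 'M['I_q]_((d + 1) * q ^ t, q + t - 1), isCDA d t A.
Proof.
move=> Hq t0 dq tq.
have [enc [dec [pt [decK [encK ptI]]]]] := codes Hq.
pose s (c : 'I_(d+1)) : F := pt c.
pose X := ('I_(d+1) * {ffun 'I_t -> F})%type.
pose f (x : X) (col : nat) : 'I_q := dec (Pol s x).[pt (sig1 q col)].
have decI : injective dec := can_inj decK.
apply: (@transfer X _ _ _ _ _ f (fun x => x.1)).
- by rewrite card_prod card_ffun !card_ord Hq.
- lia.
- move=> i tup il c.
  have [|g Hg] := @Pol_cover F t d s (fun j => pt (sig1 q (i + j))) _ c
                    (fun j => enc (tnth tup j)).
    move=> a b a_t b_t /ptI.
    case: (sig1_spec q (i+a)) => [] [? ->]; case: (sig1_spec q (i+b)) => [] [? ->]; lia.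
  by exists (c, g); split => // j; rewrite /f Hg encK.
move=> x x' i i' nx il i'l nii'.
wlog lt : x x' i i' nx il i'l nii' / (i < i')%N.
  move=> W; case: (ltngtP i i') => [lt|lt|eq]; first exact: W.
    by move=> A1 A2; apply: (W x x' i' i) => //; rewrite eq_sym.
  by rewrite eq in nii'; rewrite eqxx in nii'.
move=> A1 A2.
pose xcol := if (i' <= i + t)%N then (i + t)%N else i'.
have xin : exists2 j0, (j0 < t)%N & xcol = (i' + j0)%N.
  rewrite /xcol; case: ifP => h.
    by exists (i + t - i')%N; lia.
  by exists 0%N; [lia|rewrite addn0].
have xnot m : (m < t)%N -> sig1 q xcol <> sig1 q (i + m).
  move=> mt; rewrite /xcol; case: ifP => h;
  case: (sig1_spec q (i+m)) => [] [? ->];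
  (case: (sig1_spec q (i+t)) => [] [? ->] || case: (sig1_spec q i') => [] [? ->]); lia.
pose cols m := if (m < t)%N then (i + m)%N else xcol.
have eqP' : Pol s x = Pol s x'.
  apply: (@poly_eq_roots _ _ _ t.+1 (fun m => pt (sig1 q (cols m)))).
  - exact: Pol_size.
  - exact: Pol_size.
  - move=> a b al bl e.
    have sq n : (n <= q + t - 1)%N -> (sig1 q n < q)%N.
      by move=> nl; case: (sig1_spec q n) => [] [? ->]; lia.
    have xl : (xcol <= q + t - 1)%N by rewrite /xcol; case: ifP; lia.
    have cl m : (cols m <= q + t - 1)%N by rewrite /cols; case: ifP; lia.
    have := ptI _ _ (sq _ (cl a)) (sq _ (cl b)) e.
    rewrite /cols; case: ifP => ha; case: ifP => hb => E.
    + by move: E; case: (sig1_spec q (i+a)) => [] [? ->]; case: (sig1_spec q (i+b)) => [] [? ->]; lia.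
    + by exfalso; exact: (xnot a ha (esym E)).
    + by exfalso; exact: (xnot b hb E).
    + lia.
  - move=> m ml; apply: decI; rewrite /cols; case: ifP => h.
      exact: A1.
    by have [j0 j0t ->] := xin; apply: A2.
have [es e2] := Pol_inj eqP'.
have ec : x.1 = x'.1.
  apply: val_inj; apply: ptI es; (apply: leq_trans (ltn_ord _) _; lia).
by move: nx; case: x ec e2 {A1 A2 eqP' es} => [c g]; case: x' => [c' g'] /= -> ->; rewrite eqxx.
Qed.
Lemma Pol2_eval (F : fieldType) d (s : 'I_(d+1) -> F)
  (x : 'I_(d+1) * {ffun 'I_2 -> F}) (p : F) :
  (Pol s x).[p] = x.2 ord0 + x.2 ord_max * p + s x.1 * p ^+ 2.
Proof.
rewrite (@horner_coef_wide _ 3) ?Pol_size // !big_ord_recr big_ord0 /=.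
rewrite add0r expr0 mulr1 expr1.
rewrite (Pol_coefj s x ord0) (Pol_coefj s x ord_max) (Pol_coeft s x).
by [].
Qed.

Lemma Pol2_c1 (F : fieldType) d (s : 'I_(d+1) -> F)
  (x : 'I_(d+1) * {ffun 'I_2 -> F}) : (Pol s x)`_1 = x.2 ord_max.
Proof. exact: (Pol_coefj s x ord_max). Qed.

Lemma sq_char2 (F : fieldType) (a b : F) : (2%N \in [pchar F])%R ->
  a ^+ 2 - b ^+ 2 = (a - b) ^+ 2.
Proof.
move=> c2; have h2 : (2%:R : F) = 0 := pcharf0 c2.
have -> : a ^+ 2 - b ^+ 2 = (a - b) ^+ 2 + 2%:R * (a * b - b ^+ 2) by ring.
by rewrite h2 mul0r addr0.
Qed.

Lemma ord2P (j : 'I_2) : j = ord0 \/ j = ord_max.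
Proof. by case: j => [[|[|m]]] jl; [left|right|]; try apply: val_inj. Qed.

Lemma nuc_pts (F : fieldType) d (s : 'I_(d+1) -> F)
  (x x' : 'I_(d+1) * {ffun 'I_2 -> F}) (p p' : F) : (2%N \in [pchar F])%R ->
  p != p' -> x.2 ord_max = x'.2 ord_max ->
  (Pol s x).[p] = (Pol s x').[p] -> (Pol s x).[p'] = (Pol s x').[p'] ->
  s x.1 = s x'.1 /\ x.2 = x'.2.
Proof.
move=> c2 np eb; rewrite !Pol2_eval eb => E1 E2.
set a := x.2 ord0 in E1 E2 *; set a' := x'.2 ord0 in E1 E2 *.
set b := x'.2 ord_max in E1 E2 eb *.
set g := s x.1 in E1 E2 *; set g' := s x'.1 in E1 E2 *.
have H : (g - g') * (p ^+ 2 - p' ^+ 2) =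
  ((a + b * p + g * p ^+ 2) - (a' + b * p + g' * p ^+ 2)) -
  ((a + b * p' + g * p' ^+ 2) - (a' + b * p' + g' * p' ^+ 2)) by ring.
move: H; rewrite E1 E2 !subrr sq_char2 // => /eqP.
rewrite mulf_eq0 expf_eq0 /= !subr_eq0 (negbTE np) orbF => /eqP eg.
split => //; move: E1; rewrite eg => /addIr /addIr ea.
apply/ffunP => j; case: (ord2P j) => ->; [exact: ea | exact: eb].
Qed.
Lemma part2 (F : finFieldType) (q h d : nat) : #|F| = q -> q = (2 * h)%N ->
  (2%N \in [pchar F])%R -> (2 <= h)%N -> (d < q)%N ->
  exists A : 'M['I_q]_((d + 1) * q ^ 2, 2 * q + 3), isCDA d 2 A.
Proof.
move=> Hq qh c2 h2 dq.
have [enc [dec [pt [decK [encK ptI]]]]] := codes Hq.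
pose s (c : 'I_(d+1)) : F := pt c.
pose X := ('I_(d+1) * {ffun 'I_2 -> F})%type.
pose vv (x : X) (u : nat) : F :=
  if (u < q)%N then (Pol s x).[pt u] else (Pol s x)`_1.
pose f (x : X) (col : nat) : 'I_q := dec (vv x (sig2 q h col)).
have decI : injective dec := can_inj decK.
apply: (@transfer X _ _ _ _ _ f (fun x => x.1)).
- by rewrite card_prod card_ffun !card_ord Hq.
- lia.
- move=> i tup il c.
  have W := @sig2_winP q h i qh h2 ltac:(lia).
  have [ua [ub nab]] := win_basic qh h2 W.
  move: ua ub nab {W}; set u := sig2 q h i; set u' := sig2 q h i.+1 => ua ub nab.
  set Y0 := enc (tnth tup ord0); set Y1 := enc (tnth tup ord_max).
  suff [g [g0 g1]] : exists g, vv (c, g) u = Y0 /\ vv (c, g) u' = Y1.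
    exists (c, g); split => // j; case: (ord2P j) => -> /=.
      by rewrite [(i + 0)%N]addn0 /f -/u g0 encK.
    by rewrite [(i + 1)%N]addn1 /f -/u' g1 encK.
  rewrite /vv; case: ltnP => uq; case: ltnP => u'q.
  + have [|g Hg] := @Pol_cover F 2 d s (fun j => pt (if j == 0%N then u else u')) _ c
                      (fun j => enc (tnth tup j)).
      move=> a b al bl; case: (a =P 0%N) => ea; case: (b =P 0%N) => eb;
      move/ptI; (try lia); move=> H; (have := H uq u'q) || (have := H u'q uq); lia.
    by exists g; split; [exact: (Hg ord0) | exact: (Hg ord_max)].
  + exists [ffun j => if j == ord0 then Y0 - Y1 * pt u - s c * pt u ^+ 2 else Y1].
    rewrite Pol2_c1 Pol2_eval /= !ffunE /=; split => //; ring.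
  + exists [ffun j => if j == ord0 then Y1 - Y0 * pt u' - s c * pt u' ^+ 2 else Y0].
    rewrite Pol2_c1 Pol2_eval /= !ffunE /=; split => //; ring.
  + lia.
move=> x x' i i' nx il i'l nii' A1 A2.
have W := @sig2_winP q h i qh h2 ltac:(lia).
have W' := @sig2_winP q h i' qh h2 ltac:(lia).
have [ua [ub nab]] := win_basic qh h2 W.
have [ua' [ub' nab']] := win_basic qh h2 W'.
have [D1 D2] := win_dist qh h2 W W' ltac:(by move/eqP: nii').
pose ag u := vv x u = vv x' u.
have V1 : ag (sig2 q h i) by apply: decI; have := A1 0%N isT; rewrite [(i + 0)%N]addn0.
have V2 : ag (sig2 q h i.+1) by apply: decI; have := A1 1%N isT; rewrite [(i + 1)%N]addn1.
have V3 : ag (sig2 q h i') by apply: decI; have := A2 0%N isT; rewrite [(i' + 0)%N]addn0.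
have V4 : ag (sig2 q h i'.+1) by apply: decI; have := A2 1%N isT; rewrite [(i' + 1)%N]addn1.
have [u3 [u3l u3a] [n1 n2]] : exists2 u3, (u3 <= q)%N /\ ag u3 &
    u3 <> sig2 q h i /\ u3 <> sig2 q h i.+1.
  case: (boolP ((sig2 q h i' == sig2 q h i) || (sig2 q h i' == sig2 q h i.+1))).
    move=> /orP H; exists (sig2 q h i'.+1) => //; case: H => /eqP; lia.
  rewrite negb_or => /andP[/eqP ? /eqP ?]; by exists (sig2 q h i').
move: V1 V2 ua ub nab n1 n2; set u1 := sig2 q h i; set u2 := sig2 q h i.+1.
move=> V1 V2 ua ub nab n1 n2.
have nuc : forall a b c, a = q -> (b < q)%N -> (c < q)%N -> b <> c ->
    ag a -> ag b -> ag c -> s x.1 = s x'.1 /\ x.2 = x'.2.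
  move=> a b c -> bq cq nbc; rewrite /ag /vv ltnn bq cq !Pol2_c1 => Ea Eb Ec.
  apply: nuc_pts c2 _ Ea Eb Ec.
  by apply/eqP => /ptI; move=> H; apply: nbc; apply: H.
have [es e2] : s x.1 = s x'.1 /\ x.2 = x'.2.
  case: (ltnP u1 q) => q1; case: (ltnP u2 q) => q2; case: (ltnP u3 q) => q3.
  - apply: Pol_inj.
    apply: (@poly_eq_roots _ _ _ 3 (fun m => pt (nth 0%N [:: u1; u2; u3] m))).
    + exact: Pol_size.
    + exact: Pol_size.
    + move=> a b al bl /ptI.
      have nq m : (m < 3)%N -> (nth 0%N [:: u1; u2; u3] m < q)%N.
        by case: m => [|[|[|]]].
      move=> /(_ (nq _ al) (nq _ bl)).
      by case: a al => [|[|[|]]] //; case: b bl => [|[|[|]]] //= _ _; lia.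
    + move=> m; case: m => [|[|[|]]] // _ /=.
      * by move: V1; rewrite /ag /vv q1.
      * by move: V2; rewrite /ag /vv q2.
      * by move: u3a; rewrite /ag /vv q3.
  - by apply: (nuc u3 u1 u2) => //; lia.
  - by apply: (nuc u2 u1 u3) => //; lia.
  - lia.
  - by apply: (nuc u1 u2 u3) => //; lia.
  - lia.
  - lia.
  - lia.
have ec : x.1 = x'.1.
  apply: val_inj; apply: ptI es; (apply: leq_trans (ltn_ord _) _; lia).
by move: nx; case: x ec e2 {A1 A2 es V1 V2 V3 V4 u3a nuc ag} => [c g]; case: x' => [c' g'] /= -> ->; rewrite eqxx.
Qed.

Local Close Scope ring_scope.
Unset Implicit Arguments.

Theorem mainTheorem9 (q : nat) (hq : prime_power q) :
  (forall d t : nat, (0 < d)%N -> (0 < t)%N -> (d < q)%N -> (t.+1 < q)%N ->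
     exists A : 'M['I_q]_((d + 1) * q ^ t, q + t - 1),
       optimumCDA d t A) /\
  ((exists e : nat, q = (2 ^ e)%N) -> (4 <= q)%N ->
     forall d : nat, (0 < d)%N -> (d < q)%N ->
     exists A : 'M['I_q]_((d + 1) * q ^ 2, 2 * q + 3),
       optimumCDA d 2 A).
Proof.
split.
  move=> d t d0 t0 dq tq.
  have [p [e [pp [e0 qe]]]] := hq.
  have [Fm _ Hc] := pPrimePowerField pp e0.
  have [A HA] := @part1 Fm q d t (etrans Hc (esym qe)) t0 dq tq.
  by exists A; split.
move=> [e qe] q4 d d0 dq.
have e2 : (2 <= e)%N.
  case: e qe => [|[|e]] qe //; rewrite qe in q4; by [].
have [Fm c2 Hc] := @pPrimePowerField 2 e isT ltac:(lia).
have qh : q = (2 * 2 ^ e.-1)%N by rewrite -expnS prednK ?qe //; lia.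
have h2 : (2 <= 2 ^ e.-1)%N.
  by rewrite -(expn1 2) leq_exp2l //; lia.
have [A HA] := @part2 Fm q (2 ^ e.-1) d (etrans Hc (esym qe)) qh c2 h2 dq.
by exists A; split.
Qed.
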